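(* Given any non-empty closed subset $S$ of the extended real numbers $\overline{\mathbb{R}}$, there is a real valued function $f$ defined on the closed interval $[0,1]$ such that the set of right hand sequential secant derivatives of $f$ at $0$ equals $S$.
   Context: $\overline{\mathbb{R}}=\mathbb{R}\cup\{\pm\infty\}$. A set $S\subseteq\overline{\mathbb{R}}$ is called closed if every $L\in\overline{\mathbb{R}}$ for which there is a sequence of real numbers $L_n\in S\cap\mathbb{R}$ with $L_n\to L$ belongs to $S$. For $f:[0,1]\to\mathbb{R}$, $L\in\overline{\mathbb{R}}$ is a right hand sequential secant derivative of $f$ at $0$ if there is a sequence $h_n>0$ with $h_n\to0$ and $\frac{f(h_n)-f(0)}{h_n}\to L$ as $n\to\infty$. *)

(* Defs.v *)
From Stdlib Require Import Reals.
From Coquelicot Require Import Coquelicot.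
Open Scope R_scope.

Definition closed_Rbar_set (S : Rbar -> Prop) : Prop :=
  forall L : Rbar,
    (exists u : nat -> R, (forall n, S (Finite (u n))) /\ is_lim_seq u L) ->
    S L.

(* L is a right hand sequential secant derivative of f at 0: there is a
   sequence h_n > 0 with h_n -> 0 and (f(h_n) - f(0))/h_n -> L.
   f is meant as a function on [0,1]; we require h_n in (0,1] so only the
   values of f on [0,1] are used. *)
Definition rh_secant_derivative (f : R -> R) (L : Rbar) : Prop :=
  exists h : nat -> R,
    (forall n, 0 < h n <= 1) /\
    is_lim_seq h 0 /\
    is_lim_seq (fun n => (f (h n) - f 0) / h n) L.

(* Main.v *)
Require Import Defs.
From Stdlib Require Import Reals Lra Psatz ZArith ClassicalEpsilon Classical.
From Coquelicot Require Import Coquelicot.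
Open Scope R_scope.

Definition yv (h : R) : R :=
  let z := / h in let N := IZR (up z) in N * (2 * (N - z) - 1).
Definition hh (t N : R) : R := / (N - (t / N + 1) / 2).

Lemma yv_hh (t : R) (n : Z) : 2 <= IZR n -> Rabs t < IZR n ->
  yv (hh t (IZR n)) = t /\ 0 < hh t (IZR n) /\ hh t (IZR n) <= / (IZR n - 1)
  /\ IZR n - 1 < / hh t (IZR n).
Proof.
  intros H2 Ht. set (N := IZR n) in *.
  destruct (Rabs_def2 _ _ Ht) as [Ht1 Ht2].
  assert (Hq : t = (t / N) * N) by (field; lra).
  assert (Hq1 : t / N < 1) by nra.
  assert (Hq2 : -1 < t / N) by nra.
  set (z := N - (t / N + 1) / 2).
  assert (Hz1 : N - 1 < z) by (unfold z; lra).
  assert (Hz2 : z < N) by (unfold z; lra).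
  assert (Hinv : / hh t N = z) by (unfold hh; fold z; apply Rinv_inv).
  assert (Hup : n = up z) by (apply tech_up; fold N; lra).
  repeat split.
  - unfold yv. rewrite Hinv, <- Hup. fold N. unfold z. field. lra.
  - unfold hh. fold z. apply Rinv_0_lt_compat. lra.
  - unfold hh. fold z. apply Rinv_le_contravar; lra.
  - rewrite Hinv. lra.
Qed.

Section G.
Variable S : Rbar -> Prop.

Definition P1 h := fun a => S (Finite a) /\ Rabs (a - yv h) < h.

Definition g (h : R) : R :=
  if excluded_middle_informative (exists a, P1 h a) then epsilon (inhabits 0) (P1 h)
  else if excluded_middle_informative (S p_infty /\ (0 <= yv h \/ ~ S m_infty)) then / h
  else if excluded_middle_informative (S m_infty) then - / h
  else epsilon (inhabits 0) (fun a => S (Finite a)).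

Lemma g_cases h : (exists L, S L) ->
  S (Finite (g h)) \/ (g h = / h /\ S p_infty) \/ (g h = - / h /\ S m_infty).
Proof.
  intros [L HL]. unfold g.
  destruct excluded_middle_informative as [E|E].
  { left. exact (proj1 (epsilon_spec _ _ E)). }
  destruct excluded_middle_informative as [E2|E2].
  { right; left; tauto. }
  destruct excluded_middle_informative as [E3|E3].
  { right; right; tauto. }
  left. apply (epsilon_spec _ (fun a => S (Finite a))).
  destruct L as [r| |]; [exists r; exact HL| tauto | tauto].
Qed.

Lemma g_fin h t : S (Finite t) -> Rabs (t - yv h) < h -> Rabs (g h - yv h) < h.
Proof.
  intros H1 H2. unfold g.
  destruct excluded_middle_informative as [E|E].
  { exact (proj2 (epsilon_spec _ _ E)). }
  exfalso; apply E; exists t; split; auto.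
Qed.

Lemma g_plus h : S p_infty -> 0 <= yv h -> g h = / h \/ Rabs (g h - yv h) < h.
Proof.
  intros H1 H2. unfold g.
  destruct excluded_middle_informative as [E|E].
  { right. exact (proj2 (epsilon_spec _ _ E)). }
  destruct excluded_middle_informative as [E2|E2].
  { left; auto. }
  tauto.
Qed.

Lemma g_minus h : S m_infty -> yv h < 0 -> g h = - / h \/ Rabs (g h - yv h) < h.
Proof.
  intros H1 H2. unfold g.
  destruct excluded_middle_informative as [E|E].
  { right. exact (proj2 (epsilon_spec _ _ E)). }
  destruct excluded_middle_informative as [E2|E2].
  { exfalso. destruct E2 as [_ [E2|E2]]; [lra|tauto]. }
  destruct excluded_middle_informative as [E3|E3].
  { left; auto. }
  tauto.
Qed.
End G.
Lemma NkE (m : Z) (k : nat) : IZR (m + Z.of_nat k + 2) = IZR m + INR k + 2.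
Proof. rewrite !plus_IZR, <- INR_IZR_INZ. reflexivity. Qed.

Lemma inv_lim : is_lim_seq (fun k => / (INR k + 1)) 0.
Proof.
  assert (H : is_lim_seq (fun k => INR k + 1) p_infty).
  { apply (is_lim_seq_le_p_loc INR). exists 0%nat; intros; lra. apply is_lim_seq_INR. }
  replace (Finite 0) with (Rbar_inv p_infty) by reflexivity.
  apply (is_lim_seq_inv _ _ H). discriminate.
Qed.

Lemma hseq (m : Z) (t : nat -> R) : 0 <= IZR m ->
  (forall k, Rabs (t k) < IZR m + INR k + 2) ->
  (forall k, 0 < hh (t k) (IZR (m + Z.of_nat k + 2)) <= 1 /\
     yv (hh (t k) (IZR (m + Z.of_nat k + 2))) = t k /\
     IZR m + INR k + 1 < / hh (t k) (IZR (m + Z.of_nat k + 2))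
     /\ hh (t k) (IZR (m + Z.of_nat k + 2)) <= / (INR k + 1)) /\
  is_lim_seq (fun k => hh (t k) (IZR (m + Z.of_nat k + 2))) 0.
Proof.
  intros Hm Ht.
  assert (Hk : forall k, 0 < hh (t k) (IZR (m + Z.of_nat k + 2)) <= 1 /\
     yv (hh (t k) (IZR (m + Z.of_nat k + 2))) = t k /\
     IZR m + INR k + 1 < / hh (t k) (IZR (m + Z.of_nat k + 2))
     /\ hh (t k) (IZR (m + Z.of_nat k + 2)) <= / (INR k + 1)).
  { intro k. pose proof (pos_INR k) as Hp.
    destruct (yv_hh (t k) (m + Z.of_nat k + 2)) as [E1 [E2 [E3 E4]]].
    { rewrite NkE; lra. } { rewrite NkE; apply Ht. }
    set (hk := hh (t k) (IZR (m + Z.of_nat k + 2))) in *.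
    rewrite NkE in E3, E4.
    assert (/ (IZR m + INR k + 2 - 1) <= / (INR k + 1)).
    { apply Rinv_le_contravar; lra. }
    assert (/ (INR k + 1) <= 1).
    { rewrite <- Rinv_1. apply Rinv_le_contravar; lra. }
    repeat split; auto; lra. }
  split; [exact Hk|].
  apply (is_lim_seq_le_le (fun _ => 0) _ (fun k => / (INR k + 1))).
  - intro k; destruct (Hk k) as [[A _] [_ [_ B]]]; lra.
  - apply is_lim_seq_const.
  - apply inv_lim.
Qed.

Lemma closed_ev (S : Rbar -> Prop) (u : nat -> R) L : closed_Rbar_set S -> is_lim_seq u L ->
  eventually (fun k => S (Finite (u k))) -> S L.
Proof.
  intros HS Hu [K HK]. apply HS. exists (fun n => u (n + K)%nat). split.
  - intro n; apply HK; lia.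
  - apply (is_lim_seq_incr_n u K L). exact Hu.
Qed.

Lemma inv_p (h : nat -> R) : (forall n, 0 < h n <= 1) -> is_lim_seq h 0 ->
  is_lim_seq (fun k => / h k) p_infty.
Proof.
  intros Hh H0. apply is_lim_seq_spec. intro M.
  apply is_lim_seq_spec in H0.
  assert (Hp : 0 < / (Rabs M + 1)) by (apply Rinv_0_lt_compat; pose proof (Rabs_pos M); lra).
  destruct (H0 (mkposreal _ Hp)) as [K HK]. exists K. intros n Hn.
  specialize (HK n Hn). simpl in HK. destruct (Hh n) as [A B].
  rewrite Rminus_0_r, Rabs_pos_eq in HK by lra.
  apply Rinv_lt_contravar in HK; [|apply Rmult_lt_0_compat; lra].
  rewrite Rinv_inv in HK. pose proof (Rle_abs M). lra.
Qed.

Theorem theorem2p5 (S : Rbar -> Prop) :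
  (exists L : Rbar, S L) -> closed_Rbar_set S ->
  exists f : R -> R, forall L : Rbar, rh_secant_derivative f L <-> S L.
Proof.
  intros Hne HS. exists (fun h => h * g S h). intro L.
  assert (Hq : forall h, 0 < h -> (h * g S h - 0 * g S 0) / h = g S h).
  { intros h Hh. field. lra. }
  split.
  - intros [h [Hh [Hh0 Hl]]].
    assert (Hg : is_lim_seq (fun k => g S (h k)) L).
    { apply (is_lim_seq_ext _ _ _ (fun k => Hq (h k) (proj1 (Hh k))) Hl). }
    pose proof (inv_p h Hh Hh0) as Hinv.
    apply is_lim_seq_spec in Hinv.
    destruct L as [r| |].
    + apply (closed_ev S _ _ HS Hg).
      apply is_lim_seq_spec in Hg.
      generalize (filter_and _ _ (Hg (mkposreal 1 Rlt_0_1)) (Hinv (Rabs r + 1))).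
      apply filter_imp. intros k [A B]. simpl in A.
      destruct (g_cases S (h k) Hne) as [C|[[C _]|[C _]]]; auto;
        rewrite C in A; exfalso; revert A B; split_Rabs; lra.
    + destruct (classic (S p_infty)) as [Hp|Hp]; [exact Hp|].
      apply (closed_ev S _ _ HS Hg).
      apply is_lim_seq_spec in Hg.
      generalize (Hg 0). apply filter_imp. intros k A.
      destruct (Hh k) as [H1 _]. pose proof (Rinv_0_lt_compat _ H1).
      destruct (g_cases S (h k) Hne) as [C|[[C D]|[C _]]]; auto.
      * tauto.
      * lra.
    + destruct (classic (S m_infty)) as [Hp|Hp]; [exact Hp|].
      apply (closed_ev S _ _ HS Hg).
      apply is_lim_seq_spec in Hg.
      generalize (Hg 0). apply filter_imp. intros k A.
      destruct (Hh k) as [H1 _]. pose proof (Rinv_0_lt_compat _ H1).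
      destruct (g_cases S (h k) Hne) as [C|[[C D]|[C D]]]; auto.
      * lra.
      * tauto.
  - intro HL.
    assert (Hsec : forall h : nat -> R, (forall n, 0 < h n <= 1) -> is_lim_seq h 0 ->
              is_lim_seq (fun k => g S (h k)) L -> rh_secant_derivative (fun h => h * g S h) L).
    { intros h Hh Hh0 Hg. exists h. split; [exact Hh|]. split; [exact Hh0|].
      apply (is_lim_seq_ext (fun k => g S (h k))); [|exact Hg].
      intro k. symmetry. apply Hq, Hh. }
    destruct L as [r| |].
    + assert (Hm : Rabs r < IZR (up (Rabs r))) by apply archimed.
      pose proof (Rabs_pos r).
      destruct (hseq (up (Rabs r)) (fun _ => r)) as [Hk Hl].
      { lra. } { intro k; pose proof (pos_INR k); lra. }
      apply (Hsec _ (fun k => proj1 (Hk k)) Hl).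
      assert (Hb : forall k, Rabs (g S (hh r (IZR (up (Rabs r) + Z.of_nat k + 2))) - r) < hh r (IZR (up (Rabs r) + Z.of_nat k + 2))).
      { intro k. destruct (Hk k) as [[A _] [B _]].
        set (hk := hh r (IZR (up (Rabs r) + Z.of_nat k + 2))) in *.
        assert (G := g_fin S hk r HL). rewrite B in G. apply G.
        rewrite Rminus_eq_0, Rabs_R0. exact A. }
      apply (is_lim_seq_le_le (fun k => r - hh r (IZR (up (Rabs r) + Z.of_nat k + 2))) _ (fun k => r + hh r (IZR (up (Rabs r) + Z.of_nat k + 2)))).
      * intro k. specialize (Hb k). revert Hb; split_Rabs; lra.
      * replace (Finite r) with (Finite (r - 0)) by (f_equal; ring).
        apply is_lim_seq_minus'; [apply is_lim_seq_const | exact Hl].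
      * replace (Finite r) with (Finite (r + 0)) by (f_equal; ring).
        apply is_lim_seq_plus'; [apply is_lim_seq_const | exact Hl].
    + destruct (hseq 0 (fun k => INR k + 1)) as [Hk Hl].
      { simpl; lra. } { intro k; pose proof (pos_INR k). simpl. rewrite Rabs_pos_eq; lra. }
      apply (Hsec _ (fun k => proj1 (Hk k)) Hl).
      apply (is_lim_seq_le_p_loc INR); [|apply is_lim_seq_INR].
      exists 0%nat. intros k _.
      destruct (Hk k) as [[A A'] [B [C _]]].
      set (hk := hh (INR k + 1) (IZR (0 + Z.of_nat k + 2))) in *.
      destruct (g_plus S hk HL) as [D|D]; [rewrite B; pose proof (pos_INR k); lra| |];
        [rewrite D; lra|]. rewrite B in D. revert D; split_Rabs; lra.
    + destruct (hseq 0 (fun k => - (INR k + 1))) as [Hk Hl].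
      { simpl; lra. } { intro k; pose proof (pos_INR k). simpl. rewrite Rabs_Ropp, Rabs_pos_eq; lra. }
      apply (Hsec _ (fun k => proj1 (Hk k)) Hl).
      apply (is_lim_seq_le_m_loc (fun k => - INR k)).
      2:{ replace m_infty with (Rbar_opp p_infty) by reflexivity.
          apply (is_lim_seq_opp INR p_infty). apply is_lim_seq_INR. }
      exists 0%nat. intros k _.
      destruct (Hk k) as [[A A'] [B [C _]]].
      set (hk := hh (- (INR k + 1)) (IZR (0 + Z.of_nat k + 2))) in *.
      destruct (g_minus S hk HL) as [D|D]; [rewrite B; pose proof (pos_INR k); lra| |];
        [rewrite D; lra|]. rewrite B in D. revert D; split_Rabs; lra.
Qed.
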